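(* Let $\gamma\in\{\tfrac12,1,\dots\}$ and $j\in\{-\tfrac12,0,\tfrac12,\dots\}$ with $j\le\gamma-1$. Let $V_{j+1+\gamma}\subseteq F_\gamma\otimes D^+_j$ be the span of $|\gamma,\mu\rangle\otimes|j,j+1+\gamma-\mu\rangle$, $\mu\in\{-\gamma,\dots,\gamma\}$. Then the restriction of the Casimir $Q$ to $V_{j+1+\gamma}$ is not diagonalisable; consequently $Q$ is not diagonalisable on $F_\gamma\otimes D^+_j$.
   Context: Let $\mathfrak{spin}(2,1)_{\mathbb C}$ have basis $J_0,J_+,J_-$ with $[J_0,J_\pm]=\pm J_\pm$, $[J_+,J_-]=-2J_0$, and Casimir $Q=-J_0(J_0-1)+J_+J_-$. Set $\Gamma_\pm(j,m)=\mathrm i\sqrt{j\mp m}\,\sqrt{j\pm m+1}$. A module with basis $\{|j,m\rangle\}$ has action $J_0|j,m\rangle=m|j,m\rangle$, $J_\pm|j,m\rangle=\Gamma_\pm(j,m)|j,m\pm1\rangle$. The positive discrete series module $D^+_j$ has basis $|j,m\rangle$, $m\in\{j+1,j+2,\dots\}$; the finite-dimensional module $F_\gamma$ has basis $|\gamma,\mu\rangle$, $\mu\in\{-\gamma,\dots,\gamma\}$. On a tensor product the generators act as $J_0\otimes1+1\otimes J_0$, $J_\pm\otimes1+1\otimes J_\pm$. *)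

(* Defs.v *)
From HB Require Import structures.
From mathcomp Require Import all_boot all_order all_algebra all_field.
Set Implicit Arguments. Unset Strict Implicit. Unset Printing Implicit Defensive.
Import Order.TTheory GRing.Theory Num.Theory.
Local Open Scope ring_scope.

(* Half-integer parameters: gamma = g/2 (g : nat), j = (k-1)/2 (k : nat). *)
Definition gam (g : nat) : algC := g%:R / 2.
Definition jj (k : nat) : algC := (k%:R - 1) / 2.

Definition Gp (j m : algC) : algC := 'i * sqrtC (j - m) * sqrtC (j + m + 1).
Definition Gm (j m : algC) : algC := 'i * sqrtC (j + m) * sqrtC (j - m + 1).

(* Basis |gamma,mu_a> (x) |j,m_n> of F_gamma (x) D^+_j, a <= g, n : nat *)
Definition mu (g a : nat) : algC := a%:R - gam g.
Definition mm (k n : nat) : algC := jj k + 1 + n%:R.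

(* A vector is given by its coefficient function v a n on |mu_a> (x) |m_n>. *)
Definition vec := nat -> nat -> algC.

(* Elements of F_gamma (x) D^+_j: a <= g and finitely many n. *)
Definition in_tensor (g : nat) (v : vec) : Prop :=
  exists N : nat, forall a n, (g < a)%N \/ (N <= n)%N -> v a n = 0.

(* V_{j+1+gamma}: span of |mu> (x) |j+1+gamma-mu>, i.e. n = g - a. *)
Definition in_V (g : nat) (v : vec) : Prop :=
  forall a n, (g < a)%N \/ n <> (g - a)%N -> v a n = 0.

(* Generators acting on the tensor product (coefficient form of
   J (x) 1 + 1 (x) J applied to a finite linear combination of basis vectors). *)
Definition J0 (g k : nat) (v : vec) : vec :=
  fun a n => (mu g a + mm k n) * v a n.
Definition Jp (g k : nat) (v : vec) : vec :=
  fun a n =>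
    (if a is a'.+1 then Gp (gam g) (mu g a') * v a' n else 0)
  + (if n is n'.+1 then Gp (jj k) (mm k n') * v a n' else 0).
Definition Jm (g k : nat) (v : vec) : vec :=
  fun a n => Gm (gam g) (mu g a.+1) * v a.+1 n + Gm (jj k) (mm k n.+1) * v a n.+1.

Definition Cas (g k : nat) (v : vec) : vec :=
  fun a n => - J0 g k (fun a' n' => J0 g k v a' n' - v a' n') a n
             + Jp g k (Jm g k v) a n.

Definition diagonalisable_on (W : vec -> Prop) (T : vec -> vec) : Prop :=
  forall v, W v -> exists (r : nat) (lam : 'I_r -> algC) (e : 'I_r -> vec),
    (forall i, W (e i) /\ forall a n, T (e i) a n = lam i * e i a n) /\
    (forall a n, v a n = \sum_(i < r) e i a n).

(* Main.v *)
Require Import Defs.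
From mathcomp Require Import all_boot all_order all_algebra all_field.
From mathcomp Require Import ring lra zify.
From Stdlib Require Import FunctionalExtensionality.
Set Implicit Arguments. Unset Strict Implicit. Unset Printing Implicit Defensive.
Import Order.TTheory GRing.Theory Num.Theory.
Local Open Scope ring_scope.

Lemma GpGm (x y : algC) : Gp x y * Gm x (y + 1) = - ((x - y) * (x + y + 1)).
Proof.
rewrite /Gp /Gm.
have -> : x - (y + 1) + 1 = x - y by ring.
have -> : x + (y + 1) = x + y + 1 by ring.
transitivity ('i ^+ 2 * (sqrtC (x - y) ^+ 2) * (sqrtC (x + y + 1) ^+ 2)); first by ring.
by rewrite !sqrtCK sqrCi; ring.
Qed.

Lemma muS g a : mu g a.+1 = mu g a + 1.
Proof. by rewrite /mu -natr1; ring. Qed.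
Lemma mmS k n : mm k n.+1 = mm k n + 1.
Proof. by rewrite /mm -natr1; ring. Qed.

Definition Lc g k a := Gp (gam g) (mu g a) * Gm (jj k) (mm k (g - a)).
Fixpoint pi g k a := if a is a'.+1 then Lc g k a' * pi g k a' else 1.

Definition E g k (a : nat) : algC :=
  - ((g%:R - a%:R + 1) * a%:R) + (g%:R - a%:R) * (g%:R + k%:R - a%:R) - g%:R * k%:R.
Definition P g k (a : nat) : algC :=
  - ((g%:R - a%:R) ^+ 2 * (a%:R + 1) * (g%:R + k%:R - a%:R)).
Definition cc g k : algC := - ((g%:R - k%:R + 1) * (g%:R - k%:R - 1)) / 4.

Definition RowE g k (x : nat -> algC) a n :=
  (- ((mu g a + mm k n) * (mu g a + mm k n - 1))) * x a
  + (if a is a'.+1 then (Gp (gam g) (mu g a') * Gm (gam g) (mu g a'.+1)) * x a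
        + (Gp (gam g) (mu g a') * Gm (jj k) (mm k n.+1)) * x a' else 0)
  + (if n is n'.+1 then Gp (jj k) (mm k n') * Gm (gam g) (mu g a.+1) * x a.+1
        + (Gp (jj k) (mm k n') * Gm (jj k) (mm k n'.+1)) * x a else 0).


Definition mk (g : nat) (x : nat -> algC) : vec :=
  fun a n => if (a + n == g)%N then x a else 0.

Lemma Cas_mk g k x a n : Cas g k (mk g x) a n = if (a + n == g)%N then RowE g k x a n else 0.
Proof.
rewrite /Cas /J0 /Jp /Jm /mk /RowE.
case: a => [|a]; case: n => [|n] /=; rewrite ?addSn ?addnS ?add0n ?addn0;
  case: (_ == g); ring.
Qed.

Lemma Cas_ext g k u v : (forall a n, u a n = v a n) -> Cas g k u = Cas g k v.
Proof.
move=> h. have -> // : u = v.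
apply: functional_extensionality => a; apply: functional_extensionality => n; exact: h.
Qed.

Lemma Cas_add g k u v a n :
  Cas g k (fun a n => u a n + v a n) a n = Cas g k u a n + Cas g k v a n.
Proof. rewrite /Cas /J0 /Jp /Jm; case: a => [|a]; case: n => [|n] /=; ring. Qed.

Lemma Cas_scl g k t u a n : Cas g k (fun a n => t * u a n) a n = t * Cas g k u a n.
Proof. rewrite /Cas /J0 /Jp /Jm; case: a => [|a]; case: n => [|n] /=; ring. Qed.

Lemma Cas_0 g k a n : Cas g k (fun _ _ => 0) a n = 0.
Proof. rewrite /Cas /J0 /Jp /Jm; case: a => [|a]; case: n => [|n] /=; ring. Qed.

Lemma Cas_lin g k r (f : 'I_r -> algC) (e : 'I_r -> vec) a n :
  Cas g k (fun a n => \sum_(i < r) f i * e i a n) a n = \sum_(i < r) f i * Cas g k (e i) a n.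
Proof.
elim: r f e a n => [|r IH] f e a n.
  rewrite big_ord0 (@Cas_ext _ _ _ (fun _ _ => 0)) ?Cas_0 // => ? ?; exact: big_ord0.
rewrite (@Cas_ext _ _ _ (fun a n => (fun a n => \sum_(i < r) f (widen_ord (leqnSn r) i) * e (widen_ord (leqnSn r) i) a n) a n + (fun a n => f ord_max * e ord_max a n) a n)); last first.
  by move=> ? ?; rewrite big_ord_recr.
by rewrite Cas_add IH Cas_scl big_ord_recr.
Qed.

Lemma hlp (A1 B1 A2 B2 X : algC) : A1 * B2 * (A2 * B1 * X) = (A1 * B1) * (A2 * B2) * X.
Proof. ring. Qed.
Lemma hlp2 (A1 B1 A2 B2 Y X : algC) : A1 * B2 * (A2 * B1 * Y * X) = (A1 * B1) * (A2 * B2) * (Y * X).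
Proof. ring. Qed.

Lemma row_mk g k (z : nat -> algC) a : (a <= g)%N ->
  RowE g k (fun b => pi g k b * z b) a (g - a) =
  pi g k a * (cc g k * z a + E g k a * z a + (if a is a'.+1 then z a' else 0)
              + P g k a * z a.+1).
Proof.
move=> Ha.
have Hn : ((g - a)%N%:R : algC) = g%:R - a%:R by rewrite natrB.
rewrite /RowE.
case En: (g - a)%N => [|n'].
- case: a Ha Hn En => [|a'] Ha Hn En /=.
  + have Hg : g = 0%N by lia.
    subst g. rewrite /E /P /cc /mu /mm /gam /jj. by field.
  +
    have Hs : (g - a')%N = 1%N by lia.
    rewrite /Lc Hs !muS mmS !GpGm.
    have Hg : g = a'.+1 by lia.
    subst g. rewrite /E /P /cc /mu /mm /gam /jj -!natr1.
    by field.
- case: a Ha Hn En => [|a'] Ha Hn En /=.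
  + rewrite /Lc En (hlp2 (Gp (jj k) (mm k n'))) !muS !mmS !GpGm.
    have Hg : g = n'.+1 by lia.
    subst g. rewrite /E /P /cc /mu /mm /gam /jj -!natr1.
    by field.
  + have Hs : (g - a')%N = n'.+2 by lia.
    rewrite /Lc En Hs (hlp2 (Gp (jj k) (mm k n'))) !muS !mmS !GpGm.
    have Hg : g = (a'.+1 + n'.+1)%N by lia.
    subst g. rewrite /E /P /cc /mu /mm /gam /jj natrD -!natr1.
    by field.
Qed.

Fixpoint om g k a : algC :=
  if a is a'.+1 then om g k a' / ((a'%:R + 1) * (g%:R + k%:R - a'%:R)) else 1.
Fixpoint rho g a : algC := if a is a'.+1 then - ((g%:R - a'%:R) ^+ 2) * rho g a' else 1.
Fixpoint up2 g k a : algC * algC :=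
  if a is a'.+1 then let pr := up2 g k a' in
     (pr.2, (om g k a'.+1 - pr.1 - E g k a'.+1 * pr.2) / P g k a'.+1)
  else (0, om g k 0 / P g k 0).
Definition ups g k a := (up2 g k a).1.

Lemma ups0 g k : ups g k 0 = 0. Proof. by []. Qed.
Lemma ups1 g k : ups g k 1 = om g k 0 / P g k 0. Proof. by []. Qed.
Lemma upsSS g k a : ups g k a.+2 =
  (om g k a.+1 - ups g k a - E g k a.+1 * ups g k a.+1) / P g k a.+1.
Proof. by []. Qed.

Lemma nz1 a : (a%:R + 1 : algC) != 0.
Proof. by rewrite natr1 pnatr_eq0. Qed.

Lemma nz2 g k a : (a < g + k)%N -> (g%:R + k%:R - a%:R : algC) != 0.
Proof.
move=> h. rewrite -natrD -natrB; last by lia.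
rewrite pnatr_eq0; apply/eqP; lia.
Qed.

Lemma nz3 g a : (a < g)%N -> (g%:R - a%:R : algC) != 0.
Proof.
move=> h. rewrite -natrB; last by lia.
rewrite pnatr_eq0; apply/eqP; lia.
Qed.

Lemma Pnz g k a : (a < g)%N -> P g k a != 0.
Proof.
move=> h. rewrite /P oppr_eq0 !mulf_neq0 ?expf_neq0 ?nz1 ?nz2 ?nz3 //; lia.
Qed.

Lemma Pom g k a : (a <= g)%N -> P g k a * om g k a.+1 = - (g%:R - a%:R) ^+ 2 * om g k a.
Proof.
move=> h /=. rewrite /P.
case: (ltnP a (g + k)) => h2.
  have := nz1 a; have := nz2 h2 => n2 n1.
  by field; rewrite n1 n2.
have -> : a = g by lia.
rewrite subrr; ring.
Qed.

Lemma omprev g k a : (a < g)%N -> om g k a = (a%:R + 1) * (g%:R + k%:R - a%:R) * om g k a.+1.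
Proof.
move=> h /=. have := nz1 a; have : (a < g + k)%N by lia. move/nz2 => n2 n1.
by field; rewrite n1 n2.
Qed.

Lemma Z1 g k a : (a <= g)%N ->
  E g k a * om g k a + (if a is a'.+1 then om g k a' else 0) + P g k a * om g k a.+1 = 0.
Proof.
move=> h. rewrite Pom //.
case: a h => [|a] h.
  rewrite /E /=; ring.
rewrite (omprev k (_ : (a < g)%N)) //.
rewrite /E -!natr1; ring.
Qed.

Lemma colr g k b :
  rho g b.+1 + E g k b * rho g b + (if b is b'.+1 then P g k b' * rho g b' else 0) = 0.
Proof.
case: b => [|b] /=; rewrite /E /P -?natr1; ring.
Qed.

Lemma rho_nz g a : (a <= g)%N -> rho g a != 0.
Proof.
elim: a => [|a IH] h /=; first exact: oner_neq0.
rewrite mulf_neq0 //.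
  by rewrite oppr_eq0 expf_neq0 // nz3.
by apply: IH; lia.
Qed.

Lemma Z2 g k a : (a < g)%N ->
  E g k a * ups g k a + (if a is a'.+1 then ups g k a' else 0) + P g k a * ups g k a.+1 = om g k a.
Proof.
case: a => [|a] h.
  rewrite ups0 ups1; have := Pnz k h => n; by field.
rewrite upsSS; have := Pnz k h => n; by field.
Qed.

Lemma Wr g k m : (m < g)%N ->
  rho g m.+1 * ups g k m - P g k m * rho g m * ups g k m.+1 = - \sum_(i < m.+1) rho g i * om g k i.
Proof.
elim: m => [|m IH] h.
  rewrite big_ord_recr big_ord0 ups0 ups1 /=. have := Pnz k h => n. by field.
have S : \sum_(i < m.+2) rho g i * om g k i = \sum_(i < m.+1) rho g i * om g k i + rho g m.+1 * om g k m.+1.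
  by rewrite big_ord_recr.
rewrite S opprD -IH; last by lia.
have c := colr g k m.+1. have z := Z2 k h.
have e : rho g m.+2 = - (E g k m.+1 * rho g m.+1 + P g k m * rho g m).
  by rewrite -[LHS]subr0 -c; ring.
rewrite e -z. ring.
Qed.

Lemma rhoS g a : rho g a.+1 = - ((g%:R - a%:R) ^+ 2) * rho g a.
Proof. by []. Qed.

Lemma Pgg g k : P g k g = 0.
Proof. by rewrite /P subrr; ring. Qed.

Lemma Z2all g k a : (0 < g)%N -> \sum_(i < g.+1) rho g i * om g k i = 0 -> (a <= g)%N ->
  E g k a * ups g k a + (if a is a'.+1 then ups g k a' else 0) + P g k a * ups g k a.+1 = om g k a.
Proof.
move=> g0 Hs ha.
case: (ltnP a g) => h; first exact: Z2.
have -> : a = g by lia.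
case: g g0 Hs ha h => [//|g] _ Hs _ _.
have W := Wr k (ltnSn g).
have S : \sum_(i < g.+2) rho g.+1 i * om g.+1 k i = \sum_(i < g.+1) rho g.+1 i * om g.+1 k i + rho g.+1 g.+1 * om g.+1 k g.+1.
  by rewrite big_ord_recr.
rewrite S in Hs.
have c := colr g.+1 k g.+1.
have r0 : rho g.+1 g.+2 = 0 by rewrite rhoS subrr; ring.
rewrite r0 add0r in c.
rewrite Pgg mul0r addr0.
have nz := rho_nz (leqnn g.+1).
apply: (mulfI nz).
have e1 : P g.+1 k g * rho g.+1 g = - (E g.+1 k g.+1 * rho g.+1 g.+1).
  by apply/eqP; rewrite -addr_eq0 addrC c.
have e2 : \sum_(i < g.+1) rho g.+1 i * om g.+1 k i = - (rho g.+1 g.+1 * om g.+1 k g.+1).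
  by apply/eqP; rewrite -addr_eq0 Hs.
rewrite e2 e1 in W.
change (rho g.+1 g.+1 * (E g.+1 k g.+1 * ups g.+1 k g.+1 + ups g.+1 k g) = rho g.+1 g.+1 * om g.+1 k g.+1).
rewrite -[rho g.+1 g.+1 * om g.+1 k g.+1]opprK -W; ring.
Qed.

Lemma key g k c r : forall (lam : 'I_r -> algC) (e : 'I_r -> vec) (f : 'I_r -> algC),
  (forall i a n, Cas g k (e i) a n = lam i * e i a n) ->
  (forall a n, \sum_(i < r) f i * (lam i - c) ^+ 2 * e i a n = 0) ->
  forall a n, \sum_(i < r) f i * (lam i - c) * e i a n = 0.
Proof.
elim: r => [|r IH] lam e f Heig H a n; first by rewrite big_ord0.
set l := lam ord_max.
have H1 : forall a n, \sum_(i < r.+1) f i * (lam i - c) ^+ 2 * (lam i * e i a n) = 0.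
  move=> a' n'.
  transitivity (Cas g k (fun a n => \sum_(i < r.+1) f i * (lam i - c) ^+ 2 * e i a n) a' n').
    rewrite Cas_lin; apply: eq_bigr => i _; by rewrite Heig.
  by rewrite (@Cas_ext _ _ _ (fun _ _ => 0)) ?Cas_0.
have H2 : forall a n, \sum_(i < r.+1) f i * (lam i - c) ^+ 2 * (lam i - l) * e i a n = 0.
  move=> a' n'.
  transitivity (\sum_(i < r.+1) f i * (lam i - c) ^+ 2 * (lam i * e i a' n') -
                l * \sum_(i < r.+1) f i * (lam i - c) ^+ 2 * e i a' n').
    rewrite mulr_sumr -sumrB; apply: eq_bigr => i _; ring.
  by rewrite H1 H mulr0 subr0.
have H3 : forall a n, \sum_(i < r.+1) f i * (lam i - l) * (lam i - c) * e i a n = 0.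
  move=> a' n'.
  have z : f ord_max * (lam ord_max - l) * (lam ord_max - c) * e ord_max a' n' = 0.
    by rewrite -/l subrr mulr0 !mul0r.
  rewrite big_ord_recr /= z addr0.
  apply: (IH (fun i => lam (widen_ord (leqnSn r) i)) (fun i => e (widen_ord (leqnSn r) i))
              (fun i => f (widen_ord (leqnSn r) i) * (lam (widen_ord (leqnSn r) i) - l))).
    by move=> i; exact: Heig.
  move=> a2 n2.
  transitivity (\sum_(i < r.+1) f i * (lam i - c) ^+ 2 * (lam i - l) * e i a2 n2); last exact: H2.
  have z2 : f ord_max * (lam ord_max - c) ^+ 2 * (lam ord_max - l) * e ord_max a2 n2 = 0.
    by rewrite -/l subrr mulr0 !mul0r.
  rewrite big_ord_recr /= z2 addr0; apply: eq_bigr => i _; ring.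
case: (eqVneq l c) => hl.
  have z : f ord_max * (lam ord_max - c) * e ord_max a n = 0.
    by rewrite -/l hl subrr mulr0 !mul0r.
  rewrite big_ord_recr /= z addr0.
  apply: (IH (fun i => lam (widen_ord (leqnSn r) i)) (fun i => e (widen_ord (leqnSn r) i))
              (fun i => f (widen_ord (leqnSn r) i))).
    by move=> i; exact: Heig.
  move=> a2 n2.
  transitivity (\sum_(i < r.+1) f i * (lam i - c) ^+ 2 * e i a2 n2); last exact: H.
  have z2 : f ord_max * (lam ord_max - c) ^+ 2 * e ord_max a2 n2 = 0.
    by rewrite -/l hl subrr expr2 !mulr0 mul0r.
  by rewrite big_ord_recr /= z2 addr0.
have hl' : l - c != 0 by rewrite subr_eq0.
apply: (mulfI hl'); rewrite mulr0.
transitivity (\sum_(i < r.+1) f i * (lam i - c) ^+ 2 * e i a n -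
              \sum_(i < r.+1) f i * (lam i - l) * (lam i - c) * e i a n).
  rewrite mulr_sumr -sumrB; apply: eq_bigr => i _; ring.
by rewrite H H3 subr0.
Qed.

Definition fk (s : algC) (k b : nat) : algC := \prod_(i < k) (s - b%:R + i%:R + 1).

Lemma fk_diff s k b : fk s k.+1 b - fk s k.+1 b.+1 = k.+1%:R * fk s k b.
Proof.
rewrite /fk big_ord_recr big_ord_recl /=.
have -> : \prod_(i < k) (s - b.+1%:R + (lift ord0 i)%:R + 1) = \prod_(i < k) (s - b%:R + i%:R + 1).
  apply: eq_bigr => i _; rewrite lift0 -!natr1; ring.
rewrite -!natr1; ring.
Qed.

Lemma fk0 s b : fk s 0 b = 1.
Proof. by rewrite /fk big_ord0. Qed.

Lemma BL s n : forall k, (k < n)%N ->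
  \sum_(0 <= b < n.+1) (-1) ^+ b * 'C(n, b)%:R * fk s k b = 0.
Proof.
elim: n => [|n IH] k hk; first by [].
have E1 : \sum_(0 <= b < n.+2) (-1) ^+ b * 'C(n.+1, b)%:R * fk s k b =
  \sum_(0 <= b < n.+1) (-1) ^+ b * 'C(n, b)%:R * (fk s k b - fk s k b.+1).
  rewrite big_nat_recl //.
  have -> : \sum_(0 <= i < n.+1) (-1) ^+ i.+1 * 'C(n.+1, i.+1)%:R * fk s k i.+1 =
     \sum_(0 <= i < n.+1) (-1) ^+ i.+1 * 'C(n, i.+1)%:R * fk s k i.+1 -
     \sum_(0 <= i < n.+1) (-1) ^+ i * 'C(n, i)%:R * fk s k i.+1.
    rewrite -sumrB; apply: eq_bigr => i _; rewrite binS natrD exprS; ring.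
  have -> : \sum_(0 <= i < n.+1) (-1) ^+ i * 'C(n, i)%:R * (fk s k i - fk s k i.+1) =
     \sum_(0 <= i < n.+1) (-1) ^+ i * 'C(n, i)%:R * fk s k i -
     \sum_(0 <= i < n.+1) (-1) ^+ i * 'C(n, i)%:R * fk s k i.+1.
    rewrite -sumrB; apply: eq_bigr => i _; ring.
  have HA : \sum_(0 <= i < n.+1) (-1) ^+ i.+1 * 'C(n, i.+1)%:R * fk s k i.+1 =
     \sum_(0 <= i < n) (-1) ^+ i.+1 * 'C(n, i.+1)%:R * fk s k i.+1.
    by rewrite big_nat_recr //= bin_small // mulr0 mul0r addr0.
  have HC : \sum_(0 <= i < n.+1) (-1) ^+ i * 'C(n, i)%:R * fk s k i =
     fk s k 0 + \sum_(0 <= i < n) (-1) ^+ i.+1 * 'C(n, i.+1)%:R * fk s k i.+1.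
    by rewrite big_nat_recl //= bin0 expr0 !mul1r.
  rewrite HA HC bin0 expr0 !mul1r; ring.
rewrite E1; clear E1.
case: k hk => [|k] hk.
  by rewrite big1 // => i _; rewrite !fk0 subrr mulr0.
have -> : \sum_(0 <= b < n.+1) (-1) ^+ b * 'C(n, b)%:R * (fk s k.+1 b - fk s k.+1 b.+1) =
   k.+1%:R * \sum_(0 <= b < n.+1) (-1) ^+ b * 'C(n, b)%:R * fk s k b.
  rewrite mulr_sumr; apply: eq_bigr => i _; rewrite fk_diff; ring.
by rewrite IH ?mulr0 //; lia.
Qed.

Lemma omS g k b : om g k b.+1 = om g k b / ((b%:R + 1) * (g%:R + k%:R - b%:R)).
Proof. by []. Qed.

Lemma fk_shift (s : algC) k b : fk s k b.+1 * (s + k%:R - b%:R) = (s - b%:R) * fk s k b.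
Proof.
rewrite /fk.
have -> : \prod_(i < k) (s - b.+1%:R + i%:R + 1) = \prod_(i < k) ((s - b%:R) + i%:R).
  by apply: eq_bigr => i _; rewrite -natr1; ring.
have -> : s + k%:R - b%:R = (s - b%:R) + k%:R by ring.
have e1 : \prod_(i < k.+1) (s - b%:R + i%:R) = \prod_(i < k) (s - b%:R + i%:R) * (s - b%:R + k%:R).
  by rewrite big_ord_recr.
have e2 : \prod_(i < k.+1) (s - b%:R + i%:R) = (s - b%:R) * \prod_(i < k) (s - b%:R + i%:R + 1).
  rewrite big_ord_recl /= addr0; congr (_ * _); apply: eq_bigr => i _; rewrite /bump leq0n add1n -natr1; ring.
by rewrite -e1 e2.
Qed.

Lemma link g k b : (b <= g)%N ->
  rho g b * om g k b * fk g%:R k 0 = (-1) ^+ b * 'C(g, b)%:R * fk g%:R k b.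
Proof.
elim: b => [|b IH] hb.
  by rewrite /= bin0 expr0 !mul1r.
have hb' : (b < g)%N by lia.
have n1 := nz1 b. have n2 : (g%:R + k%:R - b%:R : algC) != 0 by apply: nz2; lia.
have nz : ((b%:R + 1) * (g%:R + k%:R - b%:R) : algC) != 0 by rewrite mulf_neq0.
apply: (mulIf nz).
transitivity (- (g%:R - b%:R) ^+ 2 * (rho g b * om g k b * fk g%:R k 0)).
  by rewrite rhoS omS; field; rewrite n1 n2.
rewrite IH; last by lia.
have F1 : ('C(g, b.+1)%:R * (b%:R + 1) : algC) = 'C(g, b)%:R * (g%:R - b%:R).
  have := congr1 (fun n : nat => n%:R : algC) (mul_bin_left g b).
  by rewrite /= !natrM natrB ?natr1 //; [move=> h; rewrite mulrC h mulrC | lia].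
have F2 := fk_shift (g%:R) k b.
transitivity (- (-1) ^+ b * ('C(g, b.+1)%:R * (b%:R + 1)) * (fk g%:R k b.+1 * (g%:R + k%:R - b%:R))); last first.
  rewrite exprS; ring.
rewrite F1 F2; ring.
Qed.

Lemma fk0nz g k : fk g%:R k 0 != 0.
Proof.
rewrite /fk; apply/prodf_neq0 => i _.
rewrite subr0 -natrD natr1 pnatr_eq0 //.
Qed.

Lemma sumid g k : (k < g)%N -> \sum_(i < g.+1) rho g i * om g k i = 0.
Proof.
move=> kg.
apply: (mulIf (fk0nz g k)); rewrite mul0r mulr_suml.
transitivity (\sum_(i < g.+1) (-1) ^+ i * 'C(g, i)%:R * fk g%:R k i).
  by apply: eq_bigr => i _; rewrite link // -ltnS.
by rewrite -(big_mkord xpredT (fun i => (-1) ^+ i * 'C(g, i)%:R * fk g%:R k i)) BL.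
Qed.

Definition uu g k := mk g (fun b => pi g k b * ups g k b).
Definition ww g k := mk g (fun b => pi g k b * om g k b).

Lemma Cas_u g k a n : (0 < g)%N -> (k < g)%N ->
  Cas g k (uu g k) a n = cc g k * uu g k a n + ww g k a n.
Proof.
move=> g0 kg.
rewrite /uu /ww Cas_mk /mk; case: ifP => /eqP h; last by rewrite mulr0 addr0.
have -> : n = (g - a)%N by lia.
rewrite row_mk; last by lia.
rewrite -(Z2all g0 (sumid kg) (_ : (a <= g)%N)); last by lia.
ring.
Qed.

Lemma Cas_w g k a n : Cas g k (ww g k) a n = cc g k * ww g k a n.
Proof.
rewrite /ww Cas_mk /mk; case: ifP => /eqP h; last by rewrite mulr0.
have -> : n = (g - a)%N by lia.
rewrite row_mk; last by lia.
have Z := Z1 k (_ : (a <= g)%N).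
transitivity (pi g k a * (cc g k * om g k a) + pi g k a * (E g k a * om g k a + (if a is a'.+1 then om g k a' else 0) + P g k a * om g k a.+1)); first ring.
by rewrite Z ?mulr0 ?addr0 //; [ring | lia].
Qed.

Lemma notdiag g k (W : vec -> Prop) : (1 <= g)%N -> (k + 1 <= g)%N -> W (uu g k) ->
  ~ diagonalisable_on W (Cas g k).
Proof.
move=> g0 kg HW D.
have kg' : (k < g)%N by lia.
have [r [lam [e [Heig Hsum]]]] := D _ HW.
have Hw : forall a n, ww g k a n = \sum_(i < r) 1 * (lam i - cc g k) * e i a n.
  move=> a n.
  have -> : ww g k a n = Cas g k (uu g k) a n - cc g k * uu g k a n by rewrite Cas_u //; ring.
  rewrite (@Cas_ext _ _ _ (fun a n => \sum_(i < r) 1 * e i a n)); last first.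
    by move=> ? ?; rewrite Hsum; apply: eq_bigr => i _; rewrite mul1r.
  rewrite Cas_lin Hsum mulr_sumr -sumrB; apply: eq_bigr => i _.
  by rewrite (proj2 (Heig i)); ring.
have H2 : forall a n, \sum_(i < r) 1 * (lam i - cc g k) ^+ 2 * e i a n = 0.
  move=> a n.
  transitivity (Cas g k (ww g k) a n - cc g k * ww g k a n); last by rewrite Cas_w subrr.
  rewrite (@Cas_ext _ _ _ (fun a n => \sum_(i < r) (1 * (lam i - cc g k)) * e i a n)); last first.
    by move=> ? ?; rewrite Hw.
  rewrite Cas_lin Hw mulr_sumr -sumrB; apply: eq_bigr => i _.
  by rewrite (proj2 (Heig i)); ring.
have := key (c:=cc g k) (fun i a n => proj2 (Heig i) a n) H2 0 g.
rewrite -Hw /ww /mk add0n eqxx /= mulr1 => /eqP; by rewrite oner_eq0.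
Qed.

Theorem mainTheorem6 (g k : nat) (hg : (1 <= g)%N) (hjg : (k + 1 <= g)%N) :
  ~ diagonalisable_on (in_V g) (Cas g k) /\
  ~ diagonalisable_on (in_tensor g) (Cas g k).
Proof.
split; apply: notdiag => //.
  move=> a n h; rewrite /uu /mk; case: ifP => // /eqP; lia.
exists g.+1 => a n h; rewrite /uu /mk; case: ifP => // /eqP; lia.
Qed.
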